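(* Let $PV_3$ be the group with generators $\lambda_{12},\lambda_{21},\lambda_{13},\lambda_{31},\lambda_{23},\lambda_{32}$ and the six defining relations $$\lambda_{ki}\lambda_{kj}\lambda_{ij}=\lambda_{ij}\lambda_{kj}\lambda_{ki}\qquad\text{for all } \{i,j,k\}=\{1,2,3\}$$ (i.e. for every ordering $(k,i,j)$ of three distinct indices). Then there exists a group $G_3$ such that $PV_3\cong G_3\ast\mathbb{Z}$.
   Context: $PV_3$ is the pure virtual braid group on three strands (the kernel of the canonical epimorphism from the virtual braid group $VB_3$ onto the symmetric group $\Sigma_3$); the presentation above is a known presentation of it and may be taken as its definition. $\ast$ denotes the free product of groups. *)

(* Defs.v *)
Record Group := {
  G_car :> Type;
  G_eq : G_car -> G_car -> Prop;
  G_mul : G_car -> G_car -> G_car;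
  G_inv : G_car -> G_car;
  G_one : G_car;
  G_refl : forall x, G_eq x x;
  G_sym : forall x y, G_eq x y -> G_eq y x;
  G_trans : forall x y z, G_eq x y -> G_eq y z -> G_eq x z;
  G_mul_compat : forall x x' y y', G_eq x x' -> G_eq y y' ->
                   G_eq (G_mul x y) (G_mul x' y');
  G_inv_compat : forall x x', G_eq x x' -> G_eq (G_inv x) (G_inv x');
  G_assoc : forall x y z, G_eq (G_mul (G_mul x y) z) (G_mul x (G_mul y z));
  G_one_l : forall x, G_eq (G_mul G_one x) x;
  G_inv_l : forall x, G_eq (G_mul (G_inv x) x) G_one
}.

Arguments G_eq {g} _ _.
Arguments G_mul {g} _ _.
Arguments G_inv {g} _.
Arguments G_one {g}.

Definition is_hom (G H : Group) (f : G -> H) : Prop :=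
  (forall x y : G, G_eq x y -> G_eq (f x) (f y)) /\
  (forall x y : G, G_eq (f (G_mul x y)) (G_mul (f x) (f y))).

Definition isomorphic (G H : Group) : Prop :=
  exists (f : G -> H) (g : H -> G),
    is_hom G H f /\ is_hom H G g /\
    (forall x : G, G_eq (g (f x)) x) /\ (forall y : H, G_eq (f (g y)) y).

Inductive word (X : Type) : Type :=
  | wgen : X -> word X
  | wone : word X
  | wmul : word X -> word X -> word X
  | winv : word X -> word X.
Arguments wgen {X} _.
Arguments wone {X}.
Arguments wmul {X} _ _.
Arguments winv {X} _.

Inductive weq (X : Type) (R : word X -> word X -> Prop) : word X -> word X -> Prop :=
  | weq_rel : forall u v, R u v -> weq X R u v
  | weq_refl : forall u, weq X R u u
  | weq_sym : forall u v, weq X R u v -> weq X R v u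
  | weq_trans : forall u v w, weq X R u v -> weq X R v w -> weq X R u w
  | weq_mul : forall u u' v v', weq X R u u' -> weq X R v v' ->
                weq X R (wmul u v) (wmul u' v')
  | weq_inv : forall u u', weq X R u u' -> weq X R (winv u) (winv u')
  | weq_assoc : forall u v w, weq X R (wmul (wmul u v) w) (wmul u (wmul v w))
  | weq_one_l : forall u, weq X R (wmul wone u) u
  | weq_inv_l : forall u, weq X R (wmul (winv u) u) wone.

Definition presented (X : Type) (R : word X -> word X -> Prop) : Group :=
  {| G_car := word X;
     G_eq := weq X R;
     G_mul := wmul;
     G_inv := winv;
     G_one := wone;
     G_refl := weq_refl X R;
     G_sym := weq_sym X R;
     G_trans := weq_trans X R;
     G_mul_compat := weq_mul X R;
     G_inv_compat := weq_inv X R;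
     G_assoc := weq_assoc X R;
     G_one_l := weq_one_l X R;
     G_inv_l := weq_inv_l X R |}.

Definition no_rel (X : Type) (u v : word X) : Prop := False.
Definition Zgroup : Group := presented unit (no_rel unit).

(* Free product G * H: presentation with generators G ⊔ H and relations
   the multiplication tables (and equalities) of G and of H. *)
Inductive fp_rel (G H : Group) : word (G_car G + G_car H) -> word (G_car G + G_car H) -> Prop :=
  | fp_mulG : forall a b : G,
      fp_rel G H (wgen (inl (G_mul a b))) (wmul (wgen (inl a)) (wgen (inl b)))
  | fp_eqG : forall a b : G, G_eq a b -> fp_rel G H (wgen (inl a)) (wgen (inl b))
  | fp_mulH : forall a b : H,
      fp_rel G H (wgen (inr (G_mul a b))) (wmul (wgen (inr a)) (wgen (inr b)))
  | fp_eqH : forall a b : H, G_eq a b -> fp_rel G H (wgen (inr a)) (wgen (inr b)).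

Definition free_product (G H : Group) : Group :=
  presented (G_car G + G_car H) (fp_rel G H).

Inductive idx3 := i1 | i2 | i3.

Inductive gen6 := l12 | l21 | l13 | l31 | l23 | l32.

(* lam i j = λ_{ij} for i <> j (the diagonal value is never used). *)
Definition lam (i j : idx3) : gen6 :=
  match i, j with
  | i1, i2 => l12 | i2, i1 => l21 | i1, i3 => l13
  | i3, i1 => l31 | i2, i3 => l23 | i3, i2 => l32
  | _, _ => l12
  end.

Inductive PV3_rel : word gen6 -> word gen6 -> Prop :=
  | pv3_rel : forall k i j : idx3, k <> i -> k <> j -> i <> j ->
      PV3_rel (wmul (wmul (wgen (lam k i)) (wgen (lam k j))) (wgen (lam i j)))
              (wmul (wmul (wgen (lam i j)) (wgen (lam k j))) (wgen (lam k i))).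

Definition PV3 : Group := presented gen6 PV3_rel.

(* Main.v *)
Require Import Defs.
From Stdlib Require Import Setoid Morphisms List Bool.
Import ListNotations.

#[export] Instance weq_equiv X R : Equivalence (weq X R).
Proof. split; [intros u; apply weq_refl | intros u v; apply weq_sym | intros u v w; apply weq_trans]. Qed.
#[export] Instance wmul_proper X R : Proper (weq X R ==> weq X R ==> weq X R) (@wmul X).
Proof. intros u u' H v v' H'. apply weq_mul; auto. Qed.
#[export] Instance winv_proper X R : Proper (weq X R ==> weq X R) (@winv X).
Proof. intros u u' H. apply weq_inv; auto. Qed.

Section Gen.
Variable X : Type.
Variable R : word X -> word X -> Prop.
Local Notation E := (weq X R).

Lemma inv_r u : E (wmul u (winv u)) wone.
Proof.
  transitivity (wmul (wmul (winv (winv u)) (winv u)) (wmul u (winv u))).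
  - symmetry. rewrite weq_inv_l. apply weq_one_l.
  - rewrite weq_assoc. rewrite <- (weq_assoc X R (winv u) u (winv u)).
    rewrite weq_inv_l, weq_one_l. apply weq_inv_l.
Qed.

Lemma one_r u : E (wmul u wone) u.
Proof.
  rewrite <- (weq_inv_l X R u). rewrite <- weq_assoc. rewrite inv_r. apply weq_one_l.
Qed.

Lemma inv_unique a b : E (wmul a b) wone -> E b (winv a).
Proof.
  intros H. rewrite <- (weq_one_l X R b). rewrite <- (weq_inv_l X R a).
  rewrite weq_assoc, H. apply one_r.
Qed.

Lemma inv_unique_l a b : E (wmul a b) wone -> E a (winv b).
Proof.
  intros H. transitivity (wmul (wmul a b) (winv b)).
  - rewrite weq_assoc, inv_r. symmetry; apply one_r.
  - rewrite H. apply weq_one_l.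
Qed.

Lemma inv_inv u : E (winv (winv u)) u.
Proof. symmetry; apply inv_unique, weq_inv_l. Qed.

Lemma inv_mul a b : E (winv (wmul a b)) (wmul (winv b) (winv a)).
Proof.
  symmetry; apply inv_unique.
  rewrite weq_assoc, <- (weq_assoc X R b (winv b) (winv a)), inv_r, weq_one_l, inv_r.
  reflexivity.
Qed.

Lemma inv_one : E (winv wone) wone.
Proof. symmetry; apply inv_unique, weq_one_l. Qed.

Lemma idem a : E (wmul a a) a -> E a wone.
Proof.
  intros H. transitivity (wmul (winv a) (wmul a a)).
  - rewrite <- weq_assoc, weq_inv_l. symmetry; apply weq_one_l.
  - rewrite H; apply weq_inv_l.
Qed.

Definition flip (p : X * bool) := (fst p, negb (snd p)).
Definition letter (p : X * bool) : word X :=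
  if snd p then wgen (fst p) else winv (wgen (fst p)).
Fixpoint den (l : list (X * bool)) : word X :=
  match l with [] => wone | p :: l' => wmul (letter p) (den l') end.
Fixpoint flat (w : word X) : list (X * bool) :=
  match w with
  | wgen x => [(x, true)]
  | wone => []
  | wmul u v => flat u ++ flat v
  | winv u => rev (map flip (flat u))
  end.

Lemma den_app l1 l2 : E (den (l1 ++ l2)) (wmul (den l1) (den l2)).
Proof.
  induction l1; simpl.
  - symmetry; apply weq_one_l.
  - rewrite IHl1. symmetry; apply weq_assoc.
Qed.

Lemma letter_flip p : E (letter (flip p)) (winv (letter p)).
Proof. destruct p as [x [|]]; simpl. reflexivity. symmetry; apply inv_inv. Qed.

Lemma den_rev l : E (den (rev (map flip l))) (winv (den l)).
Proof.
  induction l; simpl.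
  - symmetry; apply inv_one.
  - rewrite den_app, IHl. simpl. rewrite one_r, letter_flip. symmetry; apply inv_mul.
Qed.

Lemma flat_ok w : E w (den (flat w)).
Proof.
  induction w; simpl.
  - symmetry; apply one_r.
  - reflexivity.
  - rewrite den_app, <- IHw1, <- IHw2. reflexivity.
  - rewrite den_rev, <- IHw. reflexivity.
Qed.

Variable dec : forall x y : X, {x = y} + {x <> y}.

Definition step (p : X * bool) (acc : list (X * bool)) : list (X * bool) :=
  match acc with
  | q :: rest => if dec (fst p) (fst q) then
                   (if Bool.eqb (snd p) (snd q) then p :: acc else rest)
                 else p :: acc
  | [] => [p]
  end.
Fixpoint red (l : list (X * bool)) : list (X * bool) :=
  match l with [] => [] | p :: l' => step p (red l') end.

Lemma step_ok p acc : E (den (step p acc)) (wmul (letter p) (den acc)).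
Proof.
  destruct acc as [|q rest]; simpl. reflexivity.
  destruct (dec (fst p) (fst q)) as [e|n]; [|reflexivity].
  destruct (Bool.eqb (snd p) (snd q)) eqn:Hb; [reflexivity|].
  rewrite <- weq_assoc.
  destruct p as [x b], q as [y c]; simpl in *; subst y.
  destruct b, c; simpl in Hb; try discriminate; simpl; symmetry; unfold letter; simpl.
  - rewrite inv_r; apply weq_one_l.
  - rewrite weq_inv_l; apply weq_one_l.
Qed.

Lemma red_ok l : E (den (red l)) (den l).
Proof. induction l; simpl. reflexivity. rewrite step_ok, IHl. reflexivity. Qed.

Theorem free_eq u v : red (flat u) = red (flat v) -> E u v.
Proof.
  intro H. transitivity (den (red (flat u))).
  - rewrite red_ok. apply flat_ok.
  - rewrite H, red_ok. symmetry; apply flat_ok.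
Qed.

Lemma pv_case (pre post r1 r2 u v : word X) : E r1 r2 ->
  red (flat u) = red (flat (wmul (wmul pre r1) post)) ->
  red (flat v) = red (flat (wmul (wmul pre r2) post)) -> E u v.
Proof.
  intros H H1 H2. rewrite (free_eq _ _ H1), (free_eq _ _ H2), H. reflexivity.
Qed.

End Gen.

Fixpoint subst {X Y : Type} (phi : X -> word Y) (w : word X) : word Y :=
  match w with
  | wgen x => phi x
  | wone => wone
  | wmul u v => wmul (subst phi u) (subst phi v)
  | winv u => winv (subst phi u)
  end.

Lemma subst_resp X Y R S (phi : X -> word Y) :
  (forall u v, R u v -> weq Y S (subst phi u) (subst phi v)) ->
  forall u v, weq X R u v -> weq Y S (subst phi u) (subst phi v).
Proof.
  intros H u v Huv; induction Huv; simpl;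
  [apply H; auto | apply weq_refl | apply weq_sym; auto | eapply weq_trans; eauto
  | apply weq_mul; auto | apply weq_inv; auto | apply weq_assoc | apply weq_one_l
  | apply weq_inv_l].
Qed.

Inductive ygen := yA | yB | yC | yD | yE | yF.

Definition ygen_dec (x y : ygen) : {x = y} + {x <> y}. decide equality. Defined.
Definition gen6_dec (x y : gen6) : {x = y} + {x <> y}. decide equality. Defined.
Definition wy_dec (x y : word ygen) : {x = y} + {x <> y}.
  decide equality; apply ygen_dec. Defined.
Definition wu_dec (x y : word unit) : {x = y} + {x <> y}.
  decide equality; decide equality. Defined.
Definition FPgen := (word ygen + word unit)%type.
Definition fpgen_dec (x y : FPgen) : {x = y} + {x <> y}.
  decide equality; [apply wy_dec | apply wu_dec]. Defined.

(* cycle: x0=l13, x1=l12, x2=l32, x3=l31, x4=l21, x5=l23 *)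
Definition Y (y : ygen) : word gen6 :=
  match y with
  | yA => wmul (wgen l12) (wgen l13)
  | yB => wmul (wgen l12) (wgen l32)
  | yC => wmul (wgen l31) (wgen l32)
  | yD => wmul (wgen l31) (wgen l21)
  | yE => wmul (wgen l23) (wgen l21)
  | yF => wmul (wgen l23) (wgen l13)
  end.
Definition emb : word ygen -> word gen6 := subst Y.

Definition G3 : Group.
Proof.
  refine (Build_Group (word ygen) (fun u v => weq gen6 PV3_rel (emb u) (emb v))
            wmul winv wone _ _ _ _ _ _ _ _).
  - intros; apply weq_refl.
  - intros; apply weq_sym; auto.
  - intros; eapply weq_trans; eauto.
  - intros; simpl; apply weq_mul; auto.
  - intros; simpl; apply weq_inv; auto.
  - intros; simpl; apply weq_assoc.
  - intros; simpl; apply weq_one_l.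
  - intros; simpl; apply weq_inv_l.
Defined.

Notation FE := (weq FPgen (fp_rel G3 Zgroup)).
Notation PE := (weq gen6 PV3_rel).

Definition L (w : word ygen) : word FPgen := wgen (inl w).
Definition T : word FPgen := wgen (inr (wgen tt)).
Definition Rr (z : word unit) : word FPgen := wgen (inr z).

Lemma L_mul a b : FE (wmul (L a) (L b)) (L (wmul a b)).
Proof. symmetry; apply weq_rel; exact (fp_mulG G3 Zgroup a b). Qed.
Lemma L_eq a b : PE (emb a) (emb b) -> FE (L a) (L b).
Proof. intro H; apply weq_rel; exact (fp_eqG G3 Zgroup a b H). Qed.
Lemma L_one : FE (L wone) wone.
Proof.
  apply idem. rewrite L_mul. apply L_eq. simpl. apply weq_one_l.
Qed.
Lemma L_inv a : FE (L (winv a)) (winv (L a)).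
Proof.
  apply inv_unique_l. rewrite L_mul, <- L_one. apply L_eq. simpl. apply weq_inv_l.
Qed.
Lemma R_mul a b : FE (wmul (Rr a) (Rr b)) (Rr (wmul a b)).
Proof. symmetry; apply weq_rel; exact (fp_mulH G3 Zgroup a b). Qed.
Lemma R_eq a b : weq unit (no_rel unit) a b -> FE (Rr a) (Rr b).
Proof. intro H; apply weq_rel; exact (fp_eqH G3 Zgroup a b H). Qed.
Lemma R_one : FE (Rr wone) wone.
Proof. apply idem. rewrite R_mul. apply R_eq. apply weq_one_l. Qed.
Lemma R_inv a : FE (Rr (winv a)) (winv (Rr a)).
Proof.
  apply inv_unique_l. rewrite R_mul, <- R_one. apply R_eq. apply weq_inv_l.
Qed.

Definition w1 : word ygen := wgen yA.
Definition w2 : word ygen := wmul (winv (wgen yA)) (wgen yB).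
Definition w3 : word ygen := wmul (wmul (wgen yC) (winv (wgen yB))) (wgen yA).
Definition w4 : word ygen := wmul (winv w3) (wgen yD).
Definition w5 : word ygen := wmul (wgen yE) (winv w4).

Definition phi (g : gen6) : word FPgen :=
  match g with
  | l13 => T
  | l12 => wmul (L w1) (winv T)
  | l32 => wmul T (L w2)
  | l31 => wmul (L w3) (winv T)
  | l21 => wmul T (L w4)
  | l23 => wmul (L w5) (winv T)
  end.
Definition fmap : word gen6 -> word FPgen := subst phi.
Definition psi (s : FPgen) : word gen6 :=
  match s with inl w => emb w | inr z => subst (fun _ => wgen l13) z end.
Definition gmap : word FPgen -> word gen6 := subst psi.


Lemma fp_case2 (pre post : word FPgen) (a b : word ygen) (u v : word FPgen) :
  PE (wmul (emb a) (emb b)) (wmul (emb b) (emb a)) ->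
  red _ fpgen_dec (flat _ u) = red _ fpgen_dec (flat _ (wmul (wmul pre (wmul (L a) (L b))) post)) ->
  red _ fpgen_dec (flat _ v) = red _ fpgen_dec (flat _ (wmul (wmul pre (wmul (L b) (L a))) post)) ->
  FE u v.
Proof.
  intros H H1 H2.
  rewrite (free_eq _ _ fpgen_dec _ _ H1), (free_eq _ _ fpgen_dec _ _ H2).
  rewrite !L_mul. rewrite (L_eq (wmul a b) (wmul b a) H). reflexivity.
Qed.

Lemma fp_case3 (pre post : word FPgen) (a b c : word ygen) (u v : word FPgen) :
  PE (wmul (emb a) (wmul (emb b) (emb c))) (wmul (emb c) (wmul (emb b) (emb a))) ->
  red _ fpgen_dec (flat _ u) = red _ fpgen_dec (flat _ (wmul (wmul pre (wmul (L a) (wmul (L b) (L c)))) post)) ->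
  red _ fpgen_dec (flat _ v) = red _ fpgen_dec (flat _ (wmul (wmul pre (wmul (L c) (wmul (L b) (L a)))) post)) ->
  FE u v.
Proof.
  intros H H1 H2.
  rewrite (free_eq _ _ fpgen_dec _ _ H1), (free_eq _ _ fpgen_dec _ _ H2).
  rewrite !L_mul. rewrite (L_eq (wmul a (wmul b c)) (wmul c (wmul b a)) H). reflexivity.
Qed.

Lemma fp_one (a c : word ygen) (u : word FPgen) :
  red _ fpgen_dec (flat _ u) = red _ fpgen_dec (flat _ (L a)) ->
  red _ gen6_dec (flat _ (emb a)) = red _ gen6_dec (flat _ (emb c)) -> FE u (L c).
Proof.
  intros H1 H2. rewrite (free_eq _ _ fpgen_dec _ _ H1). apply L_eq.
  exact (free_eq _ _ gen6_dec _ _ H2).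
Qed.

Lemma fp_two (a b c : word ygen) (u : word FPgen) :
  red _ fpgen_dec (flat _ u) = red _ fpgen_dec (flat _ (wmul (L a) (L b))) ->
  red _ gen6_dec (flat _ (emb (wmul a b))) = red _ gen6_dec (flat _ (emb c)) -> FE u (L c).
Proof.
  intros H1 H2. rewrite (free_eq _ _ fpgen_dec _ _ H1), L_mul. apply L_eq.
  exact (free_eq _ _ gen6_dec _ _ H2).
Qed.

Ltac rl K I J := exact (weq_rel _ _ _ _ (pv3_rel K I J ltac:(discriminate) ltac:(discriminate) ltac:(discriminate))).
Ltac fc := vm_compute; reflexivity.

Definition gx0 : word gen6 := wgen l13.

Lemma f_resp : forall u v, PE u v -> FE (fmap u) (fmap v).
Proof.
  apply subst_resp. intros u v Hr. destruct Hr as [k i j Hki Hkj Hij].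
  destruct k, i, j; try (exfalso; congruence).
  -
    apply (fp_case2 wone (winv T) w1 w5); [|fc|fc].
    apply (pv_case _ _ gen6_dec wone gx0 _ _ _ _ ltac:(rl i1 i2 i3)); fc.
  -
    apply (fp_case2 T wone w1 w2); [|fc|fc].
    apply (pv_case _ _ gen6_dec (winv gx0) wone _ _ _ _ ltac:(rl i1 i3 i2)); fc.
  -
    apply (fp_case2 T wone w4 w5); [|fc|fc].
    apply (pv_case _ _ gen6_dec (winv gx0) wone _ _ _ _ ltac:(rl i2 i1 i3)); fc.
  -
    apply (fp_case3 wone (winv T) w5 w4 w3); [|fc|fc].
    apply (pv_case _ _ gen6_dec wone gx0 _ _ _ _ ltac:(rl i2 i3 i1)); fc.
  -
    apply (fp_case3 wone (winv T) w3 w2 w1); [|fc|fc].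
    apply (pv_case _ _ gen6_dec wone gx0 _ _ _ _ ltac:(rl i3 i1 i2)); fc.
  -
    apply (fp_case3 T wone w2 w3 w4); [|fc|fc].
    apply (pv_case _ _ gen6_dec (winv gx0) wone _ _ _ _ ltac:(rl i3 i2 i1)); fc.
Qed.

Lemma g_resp : forall u v, FE u v -> PE (gmap u) (gmap v).
Proof.
  apply subst_resp. intros u v Hr. destruct Hr as [a b|a b H|a b|a b H].
  - apply weq_refl.
  - exact H.
  - apply weq_refl.
  - simpl. revert H. apply subst_resp. intros ? ? [].
Qed.

Lemma gf : forall x, PE (gmap (fmap x)) x.
Proof.
  induction x; simpl.
  - match goal with |- context [wgen ?g] => destruct g end; apply (free_eq _ _ gen6_dec); fc.
  - apply weq_refl.
  - apply weq_mul; auto.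
  - apply weq_inv; auto.
Qed.

Lemma fg : forall y, FE (fmap (gmap y)) y.
Proof.
  induction y as [s| |u IHu v IHv|u IHu]; simpl.
  - destruct s as [w|z].
    + change (FE (fmap (emb w)) (L w)). induction w as [y| |u IHu v IHv|u IHu].
      * destruct y.
        -- apply (fp_one w1); fc.
        -- apply (fp_two w1 w2); fc.
        -- apply (fp_two w3 w2); fc.
        -- apply (fp_two w3 w4); fc.
        -- apply (fp_two w5 w4); fc.
        -- apply (fp_one w5); fc.
      * simpl. symmetry; apply L_one.
      * change (FE (wmul (fmap (emb u)) (fmap (emb v))) (L (wmul u v))). rewrite IHu, IHv. apply L_mul.
      * change (FE (winv (fmap (emb u))) (L (winv u))). rewrite IHu. symmetry; apply L_inv.
    + change (FE (fmap (subst (fun _ => wgen l13) z)) (Rr z)).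
      induction z as [t| |u IHu v IHv|u IHu].
      * destruct t. reflexivity.
      * simpl. symmetry; apply R_one.
      * change (FE (wmul (fmap (subst (fun _ => wgen l13) u)) (fmap (subst (fun _ => wgen l13) v))) (Rr (wmul u v))). rewrite IHu, IHv. apply R_mul.
      * change (FE (winv (fmap (subst (fun _ => wgen l13) u))) (Rr (winv u))). rewrite IHu. symmetry; apply R_inv.
  - reflexivity.
  - apply weq_mul; assumption.
  - apply weq_inv; assumption.
Qed.

Theorem proposition2p1 :
  exists G3 : Group, isomorphic PV3 (free_product G3 Zgroup).
Proof.
  exists G3. exists fmap, gmap.
  split; [split|split; [split|split]].
  - exact f_resp.
  - intros; apply weq_refl.
  - exact g_resp.
  - intros; apply weq_refl.
  - exact gf.
  - exact fg.
Qed.
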